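(* Let $G$ be a finite group with identity $e$, $R[G]$ its real group algebra, $S=\{x\in R[G]:\sum_gx_g=1,\ x_g\ge0\ \forall g\}$, and $x\in S$. Then: (1) the elements $e,x,x^2,\dots,x^{n_x-1}$ of $R[G]$ are linearly independent; (2) for nonnegative integers $r_1,r_2$, one has $c_xx^{r_1}=c_xx^{r_2}$ if and only if $r_1\equiv r_2\pmod{m_x}$.
   Context: $\mathrm{Supp}(y)=\{g:y_g\ne0\}$, $\mathbb N=\{1,2,\dots\}$, $x^0=e$. For $x\in S$: $n_x=\min\{k\in\mathbb N:(x^k)_e\ne0\}$; $G_x$ is the subgroup of $G$ generated by $\mathrm{Supp}(x^{n_x})$; $c_x=\frac1{|G_x|}\sum_{g\in G_x}g$; $m_x=\min\{k\in\mathbb N:\mathrm{Supp}(x^k)\subset G_x\}$. *)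

(* Defs.v *)
From HB Require Import structures.
From mathcomp Require Import all_boot all_order all_algebra all_fingroup.
From mathcomp Require Import boolp reals.
Set Implicit Arguments. Unset Strict Implicit. Unset Printing Implicit Defensive.
Import Order.TTheory GRing.Theory Num.Theory.
Local Open Scope ring_scope.

(* The real group algebra R[G]: elements are functions G -> R (x = sum_g x_g g). *)
Notation galg R gT := {ffun gT -> R}.

Section GroupAlgebra.
Variables (R : realType) (gT : finGroupType).
Local Notation galg := (galg R gT).

Definition gone : galg := [ffun g => (g == 1%g)%:R].

Definition gmul (x y : galg) : galg :=
  [ffun g => \sum_(h : gT) x h * y (h^-1 * g)%g].

Definition gpow (x : galg) (k : nat) : galg := iter k (gmul x) gone.

Definition supp (y : galg) : {set gT} := [set g | y g != 0].

Definition inS (x : galg) : Prop := (\sum_(g : gT) x g = 1) /\ (forall g, 0 <= x g).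

(* least k satisfying a predicate (0 if none exists; never used in that case) *)
Definition least (P : pred nat) : nat :=
  match pselect (exists k, P k) with
  | left h => ex_minn h
  | right _ => 0%N
  end.

Definition nx (x : galg) : nat := least (fun k => (0 < k)%N && (gpow x k 1%g != 0)).

Definition Gx (x : galg) : {group gT} := <<supp (gpow x (nx x))>>%G.

Definition cx (x : galg) : galg := [ffun g => (g \in Gx x)%:R / #|Gx x|%:R].

Definition mx (x : galg) : nat :=
  least (fun k => (0 < k)%N && (supp (gpow x k) \subset Gx x)).

End GroupAlgebra.

Definition lin_indep (R : realType) (gT : finGroupType) (n : nat)
    (v : 'I_n -> {ffun gT -> R}) : Prop :=
  forall c : 'I_n -> R,
    (forall g : gT, \sum_(i < n) c i * v i g = 0) -> forall i, c i = 0.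

(* Main.v *)
Require Import Defs.
From HB Require Import structures.
From mathcomp Require Import all_boot all_order all_algebra all_fingroup.
From mathcomp Require Import boolp reals.
From mathcomp Require Import zify.
Import Order.TTheory GRing.Theory Num.Theory.
Set Implicit Arguments. Unset Strict Implicit. Unset Printing Implicit Defensive.
Local Open Scope ring_scope.

Section Alg.
Variables (R : realType) (gT : finGroupType).
Local Notation G := {ffun gT -> R}.
Implicit Types x y z w : G.

Lemma gmulE y z g : gmul y z g = \sum_h y h * z (h^-1 * g)%g.
Proof. by rewrite ffunE. Qed.

Lemma gmulA y z w : gmul y (gmul z w) = gmul (gmul y z) w.
Proof.
apply/ffunP=> g; rewrite !gmulE.
under [RHS]eq_bigr do rewrite gmulE mulr_suml.
rewrite exchange_big /=; apply: eq_bigr => h _.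
rewrite gmulE mulr_sumr [RHS](reindex_inj (mulgI h)) /=; apply: eq_bigr => k _.
by rewrite mulKg mulrA invMg mulgA.
Qed.

Lemma gmul1 y : gmul (gone R gT) y = y.
Proof.
apply/ffunP=> g; rewrite gmulE (bigD1 1%g) //= !ffunE eqxx mul1r invg1 mul1g.
rewrite big1 ?addr0 // => h /negbTE hn; by rewrite ffunE hn mul0r.
Qed.

Lemma gmulg1 y : gmul y (gone R gT) = y.
Proof.
apply/ffunP=> g; rewrite gmulE (bigD1 g) //= !ffunE mulVg eqxx mulr1.
rewrite big1 ?addr0 // => h hn; rewrite ffunE -eq_mulVg1 (negbTE hn) mulr0 //.
Qed.

Lemma gpowS x k : gpow x k.+1 = gmul x (gpow x k).
Proof. by []. Qed.

Lemma gpowD x a b : gpow x (a + b) = gmul (gpow x a) (gpow x b).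
Proof.
elim: a => [|a IH]; first by rewrite add0n gmul1.
by rewrite addSn gpowS IH gmulA.
Qed.

Lemma gpow1 x : gpow x 1 = x.
Proof. by rewrite gpowS gmulg1. Qed.

Lemma gpowSr x k : gpow x k.+1 = gmul (gpow x k) x.
Proof. by rewrite -addn1 gpowD gpow1. Qed.

Definition nonneg y := forall g, 0 <= y g.

Lemma gmul_ge0 y z : nonneg y -> nonneg z -> nonneg (gmul y z).
Proof. by move=> hy hz g; rewrite gmulE sumr_ge0 // => h _; rewrite mulr_ge0. Qed.

Lemma gmul_sum y z : \sum_g gmul y z g = (\sum_g y g) * (\sum_g z g).
Proof.
under eq_bigr do rewrite gmulE.
rewrite exchange_big mulr_suml /=; apply: eq_bigr => h _.
rewrite -mulr_sumr; congr (_ * _).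
by rewrite [RHS](reindex_inj (mulgI h^-1%g)).
Qed.

Lemma gmul_ge y z h k : nonneg y -> nonneg z -> y h * z k <= gmul y z (h * k)%g.
Proof.
move=> hy hz; rewrite gmulE (bigD1 h) //= mulKg lerDl.
by apply: sumr_ge0 => i _; rewrite mulr_ge0.
Qed.

Lemma gmul_pos y z g : nonneg y -> nonneg z -> 0 < gmul y z g ->
  exists h, 0 < y h /\ 0 < z (h^-1 * g)%g.
Proof.
move=> hy hz; case: (pickP [pred h | (0 < y h) && (0 < z (h^-1 * g)%g)]).
  by move=> h /andP[] *; exists h.
move=> H0; rewrite gmulE big1 ?ltxx // => h _.
have := H0 h; rewrite /= => /negbT; rewrite negb_and.
move: (hy h) (hz (h^-1 * g)%g); rewrite !le0r.
case/orP=> [/eqP -> |->]; first by rewrite mul0r.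
case/orP=> [/eqP -> |->] //; by rewrite mulr0.
Qed.

Lemma sum1_pos y : nonneg y -> \sum_g y g = 1 -> exists g, 0 < y g.
Proof.
move=> hy hs; case: (pickP [pred g | 0 < y g]) => [g /= ?|H0]; first by exists g.
move: hs; rewrite big1 => [/eqP|g _]; first by rewrite eq_sym oner_eq0.
move: (H0 g) (hy g) => /= H1; rewrite le0r H1 orbF => /eqP //.
Qed.

Lemma gone_ge0 : nonneg (gone R gT).
Proof. by move=> g; rewrite ffunE ler0n. Qed.

Lemma gone_sum : \sum_g gone R gT g = 1.
Proof.
rewrite (bigD1 1%g) //= ffunE eqxx big1 ?addr0 // => h /negbTE hn.
by rewrite ffunE hn.
Qed.

Lemma gpow_ge0 x k : inS x -> nonneg (gpow x k).
Proof.
move=> [_ hx]; elim: k => [|k IH]; first exact: gone_ge0.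
by rewrite gpowS; apply: gmul_ge0.
Qed.

Lemma gpow_sum x k : inS x -> \sum_g gpow x k g = 1.
Proof.
move=> [hs hx]; elim: k => [|k IH]; first exact: gone_sum.
by rewrite gpowS gmul_sum hs IH mul1r.
Qed.

End Alg.

Lemma leastP (P : pred nat) : (exists k, P k) ->
  P (least P) /\ forall k, P k -> (least P <= k)%N.
Proof.
move=> ex; rewrite /least; case: pselect => [h|/(_ ex) //].
by case: (ex_minnP h) => m Pm mn; split.
Qed.
Section Main.
Variables (R : realType) (gT : finGroupType) (x : {ffun gT -> R}).
Hypothesis hS : inS x.
Local Notation p := (gpow x).

Lemma x_ge0 : nonneg x. Proof. by case: hS. Qed.
Lemma p_ge0 k : nonneg (p k). Proof. exact: gpow_ge0. Qed.
Lemma p_sum k : \sum_g p k g = 1. Proof. exact: gpow_sum. Qed.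

Lemma pos_ne0 k g : (p k g != 0) = (0 < p k g).
Proof. by rewrite lt0r p_ge0 andbT. Qed.

Lemma powa a k : x a ^+ k <= p k (a ^+ k)%g.
Proof.
elim: k => [|k IH]; first by rewrite expr0 expg0 ffunE eqxx.
rewrite gpowS expgS exprS.
apply: (le_trans _ (gmul_ge a (a ^+ k)%g x_ge0 (p_ge0 k))).
by rewrite ler_wpM2l // x_ge0.
Qed.

Lemma powa_pos a k : 0 < x a -> 0 < p k (a ^+ k)%g.
Proof. by move=> ha; apply: lt_le_trans (powa a k); rewrite exprn_gt0. Qed.

Lemma nx_ex : exists k, (0 < k)%N && (p k 1%g != 0).
Proof.
have [a ha] := sum1_pos x_ge0 hS.1.
exists #[a]%g; rewrite order_gt0 /= pos_ne0.
by have := powa_pos #[a]%g ha; rewrite expg_order.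
Qed.

Lemma nx_spec : [/\ (0 < nx x)%N, p (nx x) 1%g != 0 &
   forall k, (0 < k < nx x)%N -> p k 1%g = 0].
Proof.
have [/andP[h1 h2] h3] := leastP nx_ex; split => // k /andP[k0 kn].
apply/eqP; apply: contraTT kn => kne; rewrite -leqNgt; apply: h3.
by rewrite k0.
Qed.

Lemma part1 : lin_indep (fun i : 'I_(nx x) => gpow x i).
Proof.
have [n0 pn pk] := nx_spec; set n := nx x in n0 pn pk *.
move=> c Hc.
have key: forall k (i : 'I_n), (n <= i + k)%N -> c i = 0.
  elim=> [|k IH] i Hi; first by have := ltn_ord i; lia.
  case: (leqP n (i + k)) => [/IH //|lt].
  have hz: forall j : 'I_n, (i < j)%N -> c j = 0.
    by move=> j ij; apply: IH; lia.
  have E : \sum_(j < n) c j * p (n - i + j) 1%g = 0.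
    transitivity (\sum_h p (n - i) h * \sum_(j < n) c j * p j (h^-1 * 1)%g).
      under eq_bigr do rewrite gpowD gmulE mulr_sumr.
      rewrite exchange_big; apply: eq_bigr => h _; rewrite mulr_sumr.
      by apply: eq_bigr => j _; rewrite mulrCA.
    by rewrite big1 // => h _; rewrite Hc mulr0.
  move: E; rewrite (bigD1 i) //= big1 ?addr0.
    rewrite subnK; last exact: ltnW.
    by move/eqP; rewrite mulf_eq0 (negbTE pn) orbF => /eqP.
  move=> j ji; case: (ltngtP i j) => [ij|ji'|/val_inj e]; last by rewrite e eqxx in ji.
    by rewrite hz // mul0r.
  by rewrite pk ?mulr0 //; have := ltn_ord i; lia.
by move=> i; apply: (key n); lia.
Qed.

End Main.
Section Coset.
Variables (R : realType) (gT : finGroupType) (x : {ffun gT -> R}).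
Hypothesis hS : inS x.
Variable a : gT.
Hypothesis ha : 0 < x a.
Local Notation p := (gpow x).
Local Notation n := (nx x).
Local Notation H := (Gx x).

Lemma pn_eq : p n = gmul (p n.-1) x.
Proof. by have [n0 _ _] := nx_spec hS; rewrite -gpowSr prednK. Qed.
Lemma pn_eq' : p n = gmul x (p n.-1).
Proof. by have [n0 _ _] := nx_spec hS; rewrite -gpowS prednK. Qed.

Lemma inB g : 0 < p n g -> g \in H.
Proof. by move=> hg; apply: mem_gen; rewrite inE (pos_ne0 hS). Qed.

Lemma inB2 c b : 0 < p n.-1 c -> 0 < x b -> (c * b)%g \in H.
Proof.
move=> hc hb; apply: inB; rewrite pn_eq; apply: lt_le_trans (gmul_ge _ _ (p_ge0 hS _) (x_ge0 hS)).
by rewrite mulr_gt0.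
Qed.

Lemma claim1 b : 0 < x b -> (a^-1 * b)%g \in H.
Proof.
move=> hb; have [c hc] := sum1_pos (p_ge0 hS n.-1) (p_sum hS n.-1).
have -> : (a^-1 * b = (c * a)^-1 * (c * b))%g by rewrite invMg -mulgA mulKg.
by rewrite groupM ?groupV ?inB2.
Qed.

Lemma claim2 : a \in 'N(H)%g.
Proof.
have sub : (supp (p n) :^ a \subset H)%g.
  apply/subsetP => y; rewrite mem_conjg inE (pos_ne0 hS) => yB.
  have -> : y = ((y ^ a^-1) ^ a)%g by rewrite conjgKV.
  move: (y ^ a^-1)%g yB => g; rewrite pn_eq' => /gmul_pos.
  case/(_ (x_ge0 hS) (p_ge0 hS _)) => h [hh hu].
  have -> : (g ^ a = (a^-1 * h) * ((h^-1 * g) * a))%g.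
    by rewrite conjgE !mulgA mulgK.
  by rewrite groupM ?claim1 ?inB2.
have sub2 : (H :^ a \subset H)%g by rewrite /Gx /= -genJ gen_subG.
apply/normP/eqP; by rewrite eqEcard sub2 cardJg leqnn.
Qed.

Lemma claim3 r g : 0 < p r g -> (g * (a ^+ r)^-1)%g \in H.
Proof.
elim: r g => [|r IH] g.
  rewrite ffunE; case: eqP => [->|]; last by rewrite ltxx.
  by rewrite expg0 invg1 mulg1 group1.
rewrite gpowS => /gmul_pos; case/(_ (x_ge0 hS) (p_ge0 hS _)) => h [hh hu].
have := IH _ hu; set s := (_ * _)%g => hs.
have ht := claim1 hh; set t := (a^-1 * h)%g in ht.
have -> : (g * (a ^+ r.+1)^-1 = (t * s) ^ a^-1)%g.
  by rewrite conjgE invgK /t /s expgS invMg !mulgA mulgV mul1g mulgV mul1g.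
by rewrite memJ_norm ?groupV ?claim2 // groupM.
Qed.

Lemma claim4 r g : gmul (cx x) (p r) g = (g * (a ^+ r)^-1 \in H)%g%:R / #|H|%:R.
Proof.
have inj : injective (fun k => g * k^-1)%g by move=> k1 k2 /mulgI /invg_inj.
rewrite gmulE (reindex_inj inj) /=.
transitivity (\sum_k (g * (a ^+ r)^-1 \in H)%g%:R / #|H|%:R * p r k).
  apply: eq_bigr => k _; rewrite ffunE invMg invgK mulgKV.
  have [->|nz] := eqVneq (p r k) 0; first by rewrite !mulr0.
  move: nz; rewrite (pos_ne0 hS) => /claim3 hk.
  have -> : (g * k^-1 = (g * (a ^+ r)^-1) * (k * (a ^+ r)^-1)^-1)%g.
    by rewrite invMg invgK !mulgA mulgKV.
  by rewrite groupMr // groupV.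
by rewrite -mulr_sumr p_sum // mulr1.
Qed.

Local Notation m := (mx x).

Lemma suppH k : (supp (p k) \subset H) = ((a ^+ k)%g \in H).
Proof.
apply/idP/idP => [/subsetP sub|ak].
  by apply: sub; rewrite inE (pos_ne0 hS) powa_pos.
apply/subsetP => g; rewrite inE (pos_ne0 hS) => /claim3 hg.
by rewrite -(groupMr _ (groupVr ak)).
Qed.

Lemma mx_spec : (0 < m)%N /\ (a ^+ m)%g \in H /\
  forall k, (0 < k)%N -> (a ^+ k)%g \in H -> (m <= k)%N.
Proof.
have ex : exists k, (0 < k)%N && (supp (p k) \subset H).
  exists n; have [n0 _ _] := nx_spec hS; rewrite n0 /=; exact: subset_gen.
have [/andP[h1 h2] h3] := leastP ex.
split => //; split; first by rewrite -suppH.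
by move=> k k0 hk; apply: h3; rewrite k0 suppH.
Qed.

Lemma claim6 k : ((a ^+ k)%g \in H) = (m %| k)%N.
Proof.
have [m0 [am mmin]] := mx_spec.
have -> : (a ^+ k = (a ^+ m) ^+ (k %/ m) * a ^+ (k %% m))%g.
  by rewrite -expgM -expgD mulnC -divn_eq.
rewrite (groupMl _ (groupX _ am)) /dvdn.
case: (posnP (k %% m)) => [->|pos]; first by rewrite expg0 group1.
apply/negbTE/negP => hk.
by have := mmin _ pos hk; rewrite leqNgt ltn_pmod.
Qed.

Lemma claim7 r1 r2 : ((a ^+ r1 * (a ^+ r2)^-1)%g \in H) = (r1 == r2 %[mod m]).
Proof.
case: (leqP r2 r1) => h.
  rewrite eqn_mod_dvd // -claim6.
  by rewrite -{1}(subnK h) expgD mulgK.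
rewrite eq_sym eqn_mod_dvd ?(ltnW h) // -claim6.
have -> : (a ^+ r2 = a ^+ (r2 - r1) * a ^+ r1)%g by rewrite -expgD subnK // ltnW.
by rewrite invMg mulgA mulgV mul1g groupV.
Qed.

Lemma part2 r1 r2 :
  gmul (cx x) (gpow x r1) = gmul (cx x) (gpow x r2) <-> r1 = r2 %[mod mx x].
Proof.
have Hpos : (0 < #|H|)%N := cardG_gt0 _.
have Hne : #|H|%:R != 0 :> R by rewrite pnatr_eq0 -lt0n.
split => [E|/eqP E].
  apply/eqP; rewrite -claim7.
  move/ffunP/(_ (a ^+ r1)%g): E; rewrite !claim4 mulgV group1.
  by case: (_ \in _) => //= /eqP; rewrite mul0r mul1r invr_eq0 (negbTE Hne).
apply/ffunP => g; rewrite !claim4; congr (_%:R / _).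
have -> : (g * (a ^+ r2)^-1 = (g * (a ^+ r1)^-1) * (a ^+ r1 * (a ^+ r2)^-1))%g.
  by rewrite !mulgA mulgKV.
have hE : (a ^+ r1 * (a ^+ r2)^-1)%g \in H by rewrite claim7 E.
by rewrite (groupMr _ hE).
Qed.

End Coset.

Theorem proposition2 (R : realType) (gT : finGroupType) (x : {ffun gT -> R}) :
  inS x ->
  lin_indep (fun i : 'I_(nx x) => gpow x i) /\
  (forall r1 r2 : nat,
     gmul (cx x) (gpow x r1) = gmul (cx x) (gpow x r2) <-> r1 = r2 %[mod mx x]).
Proof.
move=> hS; split; first exact: part1.
have [a ha] := sum1_pos (x_ge0 hS) hS.1.
move=> r1 r2; exact: (part2 hS ha).
Qed.
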